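(* Let $\mathbb{K}$ be a field of characteristic zero and let $f=\frac{b}{c\,d^\lambda}\in\mathbb{K}(x,y,z)$, where $\lambda$ is a positive integer, $b,d\in\mathbb{K}[x,y,z]$, $c\in\mathbb{K}[x,y]$, $d$ is irreducible, $b,c,d$ are primitive as polynomials in $y,z$, and $\deg_z(b)<\deg_z(d)$. Suppose there is a positive integer $m$ with $\sigma_x^m(d)=\sigma_y^n\sigma_z^k(d)$ for some $n,k\in\mathbb{Z}$; let $m$ be the smallest such positive integer and fix integers $n,k$ with $\sigma_x^m(d)=\sigma_y^n\sigma_z^k(d)$. If one of the following holds: (i) there exist $n_1,n_2,k_1,k_2\in\mathbb{Z}$ with $n_1,n_2>0$ such that $\sigma_y^{n_1}(d)=\sigma_z^{k_1}(d)$ and $\sigma_x^{n_2}(c)=\sigma_y^{k_2}(c)$; (ii) there exists a positive integer $t$ such that $\sigma_x^{tm}(c)=\sigma_y^{tn}(c)$; then $f$ has a telescoper.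
   Context: $\sigma_x,\sigma_y,\sigma_z$ are the shift automorphisms of $\mathbb{K}(x,y,z)$: $\sigma_x(f)=f(x+1,y,z)$, $\sigma_y(f)=f(x,y+1,z)$, $\sigma_z(f)=f(x,y,z+1)$. A rational function $g\in\mathbb{K}(x,y,z)$ is $(\sigma_y,\sigma_z)$-summable if $g=\sigma_y(u)-u+\sigma_z(v)-v$ for some $u,v\in\mathbb{K}(x,y,z)$. A telescoper for $f$ is a nonzero operator $L=\sum_i \ell_i S_x^i$ with $\ell_i\in\mathbb{K}(x)$ such that $L(f)=\sum_i\ell_i f(x+i,y,z)$ is $(\sigma_y,\sigma_z)$-summable. *)

(* Defs.v *)
From HB Require Import structures.
From mathcomp Require Import all_boot all_order all_algebra.
From mathcomp Require Import fraction generic_quotient.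
From mathcomp.multinomials Require Import mpoly.
Set Implicit Arguments. Unset Strict Implicit. Unset Printing Implicit Defensive.
Import GRing.Theory.
Local Open Scope ring_scope.

Notation "x %:F" := (@FracField.tofrac _ x) : ring_scope.

Definition ix : 'I_3 := @Ordinal 3 0 isT.
Definition iy : 'I_3 := @Ordinal 3 1 isT.
Definition iz : 'I_3 := @Ordinal 3 2 isT.

Section Defs.
Variable K : fieldType.

Notation P := {mpoly K[3]}.
Notation RF := {fraction P}.

(* p(x,y,z) |-> p(x+a, y+b, z+c), i.e. sigma_x^a sigma_y^b sigma_z^c on K[x,y,z] *)
Definition shift (a b c : int) (p : P) : P :=
  comp_mpoly [tuple 'X_ix + (a%:~R)%:MP; 'X_iy + (b%:~R)%:MP; 'X_iz + (c%:~R)%:MP] p.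

Definition fshift (a b c : int) (u : RF) : RF :=
  let r := repr u in (shift a b c (\n_r))%:F / (shift a b c (\d_r))%:F.

Definition sigma_x (u : RF) : RF := fshift 1 0 0 u.
Definition sigma_y (u : RF) : RF := fshift 0 1 0 u.
Definition sigma_z (u : RF) : RF := fshift 0 0 1 u.

Definition in_Kx (p : P) : Prop :=
  forall m, m \in msupp p -> (m iy = 0)%N /\ (m iz = 0)%N.
Definition in_Kxy (p : P) : Prop :=
  forall m, m \in msupp p -> (m iz = 0)%N.
Definition in_Kx_frac (u : RF) : Prop :=
  exists p q : P, [/\ in_Kx p, in_Kx q, q != 0 & u = p%:F / q%:F].

Definition mdvd (g p : P) : Prop := exists h : P, p = g * h.

(* primitive as a polynomial in y,z over K[x]: every common divisor of the
   coefficients (an element of K[x] dividing p) is a constant *)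
Definition primitive_yz (p : P) : Prop :=
  forall g : P, in_Kx g -> mdvd g p -> (msize g <= 1)%N.

Definition mirreducible (p : P) : Prop :=
  (1 < msize p)%N /\ forall g h : P, p = g * h -> (msize g <= 1)%N \/ (msize h <= 1)%N.

Definition degz (p : P) : nat := \max_(m <- msupp p) m iz.

Definition summable_yz (g : RF) : Prop :=
  exists u v : RF, g = sigma_y u - u + (sigma_z v - v).

(* L = sum_i l_i S_x^i with l_i in K(x), L <> 0, and L(f) summable *)
Definition has_telescoper (f : RF) : Prop :=
  exists l : seq RF,
    [/\ forall r, r \in l -> in_Kx_frac r,
        has (fun r => r != 0) l &
        summable_yz (\sum_(i < size l) l`_i * fshift (Posz i) 0 0 f)].
End Defs.

(* Main.v *)
Require Import Defs.
From HB Require Import structures.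
From mathcomp Require Import all_boot all_order all_algebra.
From mathcomp Require Import fraction generic_quotient.
From mathcomp.multinomials Require Import mpoly.
From mathcomp Require Import ring zify.
Set Implicit Arguments. Unset Strict Implicit. Unset Printing Implicit Defensive.
Import GRing.Theory.
Local Open Scope ring_scope.

Lemma comp_mpolyA (n k l : nat) (R : comNzRingType) (lq : k.-tuple {mpoly R[l]})
  (lr : n.-tuple {mpoly R[k]}) p :
  comp_mpoly lq (comp_mpoly lr p) = comp_mpoly (map_tuple (comp_mpoly lq) lr) p.
Proof.
rewrite [comp_mpoly lr p]comp_mpolyE [RHS]comp_mpolyE raddf_sum /=; apply: eq_bigr => m _.
rewrite linearZ /= rmorph_prod /=; congr (_ *: _); apply: eq_bigr => i _.
by rewrite rmorphXn tnth_map.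
Qed.

Section S.
Variable K : fieldType.
Notation P := {mpoly K[3]}.
Notation RF := {fraction P}.

Lemma shift_comp a b c a' b' c' (p : P) :
  shift a b c (shift a' b' c' p) = shift (a+a') (b+b') (c+c') p.
Proof.
rewrite /shift comp_mpolyA; congr comp_mpoly; apply: eq_from_tnth => i.
rewrite tnth_map.
case: i => [[|[|[|i]]] Hi] //; rewrite /tnth /=;
  by rewrite raddfD /= comp_mpolyXU comp_mpolyC /= intrD mpolyCD addrA.
Qed.

Lemma shift0 (p : P) : shift 0 0 0 p = p.
Proof.
rewrite /shift -[RHS]comp_mpoly_id; congr comp_mpoly; apply: eq_from_tnth => i.
rewrite tnth_mktuple.
case: i => [[|[|[|i]]] Hi] //; rewrite /tnth /= mpolyC0 addr0;
  by congr (mpolyX _ _); apply: val_inj.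
Qed.

Lemma shiftD a b c : {morph shift a b c : p q / (p + q : P)}.
Proof. by move=> p q; rewrite /shift raddfD. Qed.
Lemma shiftM a b c : {morph shift a b c : p q / (p * q : P)}.
Proof. by move=> p q; rewrite /shift rmorphM. Qed.
Lemma shiftXn a b c e : {morph shift a b c : p / (p ^+ e : P)}.
Proof. by move=> p; rewrite /shift rmorphXn. Qed.
Lemma shiftC a b c (k : K) : shift a b c (k%:MP) = k%:MP.
Proof. by rewrite /shift comp_mpolyC. Qed.
Lemma shiftZ a b c (k : K) (p : P) : shift a b c (k *: p) = k *: shift a b c p.
Proof. by rewrite /shift comp_mpolyZ. Qed.

Lemma shift_inj a b c : injective (shift a b c : P -> P).
Proof.
move=> p q /(congr1 (shift (-a) (-b) (-c))).
by rewrite !shift_comp !addNr !shift0.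
Qed.

Lemma shift_eq0 a b c (p : P) : (shift a b c p == 0) = (p == 0).
Proof.
apply/eqP/eqP => [h|->]; last by rewrite /shift raddf0.
by apply: (@shift_inj a b c); rewrite h /shift raddf0.
Qed.

Lemma frac_repr (u : RF) : u = (\n_(repr u))%:F / (\d_(repr u))%:F.
Proof.
have hd := denom_ratioP (repr u).
apply: (canRL (mulfK _)); first by rewrite tofrac_eq0.
rewrite -{1}[u]reprK !piE; apply/eqmodP; rewrite /= FracField.equivfE /FracField.mulf.
rewrite !numden_Ratio ?mulf_neq0 ?oner_eq0 //.
by rewrite !mulr1 mulrC.
Qed.

Lemma frac_eq (p q p' q' : P) : q != 0 -> q' != 0 ->
  (p%:F / q%:F == p'%:F / q'%:F :> RF) = (p * q' == p' * q).
Proof.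
move=> hq hq'; rewrite eqr_div ?tofrac_eq0 // -!tofracM tofrac_eq //.
Qed.

Lemma fshift_frac a b c (p q : P) : q != 0 ->
  fshift a b c (p%:F / q%:F) = (shift a b c p)%:F / (shift a b c q)%:F.
Proof.
move=> hq; rewrite /fshift.
set u := p%:F / q%:F.
have hd := denom_ratioP (repr u).
have e := frac_repr u.
have : (p%:F / q%:F == (\n_(repr u))%:F / (\d_(repr u))%:F :> RF).
  by rewrite -e.
rewrite frac_eq // => /eqP /(congr1 (shift a b c)); rewrite !shiftM => h.
apply/eqP; rewrite frac_eq ?shift_eq0 //; apply/eqP; by rewrite h.
Qed.

Lemma frac_ex (u : RF) : exists p q : P, q != 0 /\ u = p%:F / q%:F.
Proof. exists (\n_(repr u)), (\d_(repr u)); split; [exact: denom_ratioP | exact: frac_repr]. Qed.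

Lemma fshiftD a b c (u v : RF) : fshift a b c (u + v) = fshift a b c u + fshift a b c v.
Proof.
have [p [q [hq ->]]] := frac_ex u; have [p' [q' [hq' ->]]] := frac_ex v.
rewrite addf_div ?tofrac_eq0 // -!tofracM -tofracD !fshift_frac ?mulf_neq0 //.
by rewrite addf_div ?tofrac_eq0 ?shift_eq0 // -!tofracM -tofracD !shiftD !shiftM.
Qed.

Lemma fshiftM a b c (u v : RF) : fshift a b c (u * v) = fshift a b c u * fshift a b c v.
Proof.
have [p [q [hq ->]]] := frac_ex u; have [p' [q' [hq' ->]]] := frac_ex v.
rewrite mulf_div -!tofracM !fshift_frac ?mulf_neq0 //.
by rewrite mulf_div -!tofracM !shiftM.
Qed.

Lemma fshift_comp a b c a' b' c' (u : RF) :
  fshift a b c (fshift a' b' c' u) = fshift (a+a') (b+b') (c+c') u.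
Proof.
have [p [q [hq ->]]] := frac_ex u.
by rewrite !fshift_frac ?shift_eq0 // !shift_comp.
Qed.

Lemma fshift0 (u : RF) : fshift 0 0 0 u = u.
Proof. have [p [q [hq ->]]] := frac_ex u. by rewrite fshift_frac // !shift0. Qed.

Lemma fshiftC a b c (k : K) : fshift a b c (k%:MP)%:F = (k%:MP)%:F.
Proof.
have -> : (k%:MP)%:F = (k%:MP)%:F / (1 : P)%:F :> RF by rewrite tofrac1 divr1.
by rewrite fshift_frac ?oner_eq0 // shiftC /shift rmorph1.
Qed.

Lemma fshiftN a b c (u : RF) : fshift a b c (- u) = - fshift a b c u.
Proof.
have -> : - u = (((-1 : K)%:MP)%:F) * u by rewrite mpolyCN tofracN tofrac1 mulN1r.
by rewrite fshiftM fshiftC mpolyCN tofracN tofrac1 mulN1r.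
Qed.

Lemma fshift_zero a b c : fshift a b c (0 : RF) = 0.
Proof.
have := fshiftC a b c (0 : K); by rewrite mpolyC0 tofrac0.
Qed.

Lemma summable0 : summable_yz (0 : RF).
Proof. exists 0, 0; by rewrite /sigma_y /sigma_z !fshift_zero !subrr addr0. Qed.

Lemma summableD (g h : RF) : summable_yz g -> summable_yz h -> summable_yz (g + h).
Proof.
move=> [u [v ->]] [u' [v' ->]]; exists (u + u'), (v + v').
rewrite /sigma_y /sigma_z !fshiftD; ring.
Qed.

Lemma summableC (k : K) (g : RF) : summable_yz g -> summable_yz ((k%:MP)%:F * g).
Proof.
move=> [u [v ->]]; exists ((k%:MP)%:F * u), ((k%:MP)%:F * v).
rewrite /sigma_y /sigma_z !fshiftM !fshiftC; ring.
Qed.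

Lemma summableN (g : RF) : summable_yz g -> summable_yz (- g).
Proof.
move=> /(summableC (-1)); by rewrite mpolyCN tofracN tofrac1 mulN1r.
Qed.

Lemma summable_sum (I : Type) (r : seq I) (F : I -> RF) :
  (forall i, summable_yz (F i)) -> summable_yz (\sum_(i <- r) F i).
Proof.
move=> h; elim: r => [|x r IH]; first by rewrite big_nil; exact: summable0.
by rewrite big_cons; apply: summableD.
Qed.

Lemma summable_y_nat (g : RF) (j : nat) : summable_yz (fshift 0 (Posz j) 0 g - g).
Proof.
elim: j => [|j IH]; first by rewrite fshift0 subrr; exact: summable0.
have -> : fshift 0 (Posz j.+1) 0 g - g =
   (sigma_y (fshift 0 (Posz j) 0 g) - fshift 0 (Posz j) 0 g) + (fshift 0 (Posz j) 0 g - g).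
  rewrite /sigma_y fshift_comp !addr0 (_ : Posz j.+1 = 1 + Posz j) ?subrKA //; lia.
apply: summableD => //; exists (fshift 0 (Posz j) 0 g), 0.
by rewrite /sigma_z fshift_zero subrr addr0.
Qed.

Lemma summable_z_nat (g : RF) (j : nat) : summable_yz (fshift 0 0 (Posz j) g - g).
Proof.
elim: j => [|j IH]; first by rewrite fshift0 subrr; exact: summable0.
have -> : fshift 0 0 (Posz j.+1) g - g =
   (sigma_z (fshift 0 0 (Posz j) g) - fshift 0 0 (Posz j) g) + (fshift 0 0 (Posz j) g - g).
  rewrite /sigma_z fshift_comp !addr0 (_ : Posz j.+1 = 1 + Posz j) ?subrKA //; lia.
apply: summableD => //; exists 0, (fshift 0 0 (Posz j) g).
by rewrite /sigma_y fshift_zero subrr add0r.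
Qed.

Lemma summable_y (g : RF) (a : int) : summable_yz (fshift 0 a 0 g - g).
Proof.
case: a => [j|j]; first exact: summable_y_nat.
set h := fshift 0 (Negz j) 0 g.
have := summableN (summable_y_nat h j.+1).
have -> : fshift 0 (Posz j.+1) 0 h = g.
  by rewrite /h fshift_comp !addr0 NegzE subrr fshift0.
by rewrite opprB.
Qed.

Lemma summable_z (g : RF) (a : int) : summable_yz (fshift 0 0 a g - g).
Proof.
case: a => [j|j]; first exact: summable_z_nat.
set h := fshift 0 0 (Negz j) g.
have := summableN (summable_z_nat h j.+1).
have -> : fshift 0 0 (Posz j.+1) h = g.
  by rewrite /h fshift_comp !addr0 NegzE subrr fshift0.
by rewrite opprB.
Qed.

Lemma summable_yz_shift (g : RF) (a b : int) : summable_yz (fshift 0 a b g - g).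
Proof.
have -> : fshift 0 a b g - g =
  (fshift 0 a 0 (fshift 0 0 b g) - fshift 0 0 b g) + (fshift 0 0 b g - g).
  rewrite fshift_comp !addr0 add0r; ring.
apply: summableD; [exact: summable_y | exact: summable_z].
Qed.

Lemma msize_expn (p : P) e : (msize p <= 2)%N -> (msize (p ^+ e) <= e.+1)%N.
Proof.
move=> hp; elim: e => [|e IH]; first by rewrite expr0 msize1.
have [->|nz] := eqVneq p 0; first by rewrite expr0n msize0.
rewrite exprS msizeM ?expf_neq0 //.
move: hp IH; set x := msize p; set y := msize (p ^+ e); lia.
Qed.

Lemma msize_XC (i : 'I_3) (k : K) : (msize ('X_i + k%:MP : P) <= 2)%N.
Proof.
apply: (leq_trans (msizeD_le _ _)); rewrite geq_max msizeC.
by rewrite msizeX mdeg1; case: (k != 0).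
Qed.

Lemma msize_prodX (t : 3.-tuple P) (m : 'X_{1..3}) (r : seq 'I_3) :
  (forall i, msize (tnth t i) <= 2)%N ->
  (msize (\prod_(i <- r) tnth t i ^+ m i) <= (\sum_(i <- r) m i).+1)%N.
Proof.
move=> ht; elim: r => [|i r IH]; first by rewrite !big_nil msize1.
rewrite !big_cons.
have [->|nz1] := eqVneq (tnth t i ^+ m i) 0; first by rewrite mul0r msize0.
have [->|nz2] := eqVneq (\prod_(j <- r) tnth t j ^+ m j) 0; first by rewrite mulr0 msize0.
rewrite msizeM //.
have := msize_expn (m i) (ht i).
move: IH; set x := msize _; set y := msize _; lia.
Qed.

Lemma msize_shift a b c (p : P) : (msize (shift a b c p) <= msize p)%N.
Proof.
rewrite /shift comp_mpolyE; apply: (leq_trans (msize_sum _ _ _)).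
apply/bigmax_leqP_seq => m hm _.
apply: (leq_trans (msizeZ_le _ _)).
apply: (leq_trans _ (msize_mdeg_lt hm)).
rewrite mdegE.
apply: msize_prodX => i.
case: i => [[|[|[|i]]] Hi] //; rewrite /tnth /=; exact: msize_XC.
Qed.

Lemma lin_dep (s : nat) (g : nat -> P) : (forall j, msize (g j) <= s)%N ->
  exists N (kap : nat -> K), (exists2 j, (j <= N)%N & kap j != 0) /\
     \sum_(j < N.+1) kap j *: g j = 0.
Proof.
move=> hg.
pose T : finType := ('X_{1..3 < s})%type.
pose N := #|T|.
pose A : 'M[K]_(N.+1, N) := \matrix_(j, i) (g j)@_(val (enum_val i)).
have nfree : ~~ row_free A.
  by rewrite -row_leq_rank -ltnNge ltnS rank_leq_col.
have : kermx A != 0 by rewrite kermx_eq0.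
case/rowV0Pn => v /sub_kermxP hv vnz.
case/rV0Pn: vnz => i0 hi0.
exists N, (fun j => if (j < N.+1)%N then v 0 (inord j) else 0); split.
  exists i0; first by rewrite -ltnS ltn_ord.
  by rewrite ltn_ord (@inord_val N i0).
apply mpolyP => m; rewrite mcoeff0 raddf_sum /=.
have [hm|hm] := ltnP (mdeg m) s.
  pose bm : T := BMultinom hm.
  have := congr1 (fun M : 'M[K]_(1, N) => M 0 (enum_rank bm)) hv.
  rewrite !mxE => h; apply: (etrans _ h); apply: eq_bigr => j _.
  by rewrite ltn_ord inord_val mcoeffZ mxE enum_rankK.
rewrite big1 // => j _; rewrite mcoeffZ memN_msupp_eq0 ?mulr0 //.
by apply: msize_mdeg_ge; apply: (leq_trans (hg j)).
Qed.

Lemma sum_reindex (M N : nat) (F : nat -> RF) : (0 < M)%N ->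
  \sum_(0 <= i < (N * M).+1) (if (M %| i)%N then F (i %/ M)%N else 0) =
  \sum_(0 <= j < N.+1) F j.
Proof.
move=> hM; elim: N => [|N IH].
  by rewrite mul0n !big_nat1 dvdn0 div0n.
rewrite (@big_cat_nat _ _ _ (N * M).+1) //=; try by rewrite ltnS leq_mul2r leqnSn orbT.
rewrite IH [in RHS]big_nat_recr //=; congr (_ + _).
have e : (N.+1 * M).+1 = (N * M + M).+1 by rewrite mulSn addnC.
rewrite e big_nat_recr /=; last by lia.
rewrite (_ : (N * M + M) = N.+1 * M)%N; last by rewrite mulSn addnC.
rewrite dvdn_mull ?dvdnn // mulnK // big1_seq ?add0r // => i /andP [_].
rewrite mem_index_iota => /andP [h1 h2].
case: ifP => // /dvdnP [q hq]; exfalso.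
move: h1 h2; rewrite hq => h1 h2.
rewrite ltn_pmul2r // in h2; rewrite -[(N * M).+1]addn1 in h1.
have h3 : (N * M < q * M)%N by lia.
rewrite ltn_pmul2r // in h3; lia.
Qed.

Lemma shift_Kxy (c : P) (e : int) : in_Kxy c -> shift 0 0 e c = c.
Proof.
move=> hc; rewrite /shift comp_mpolyE [RHS]mpolyE; apply: eq_big_seq => m hm.
congr (_ *: _); rewrite [X in _ = X]mpolyXE_id; apply: eq_bigr => i _.
case: i => [[|[|[|i]]] Hi] //; rewrite /tnth /= ?mpolyC0 ?addr0.
- by congr (_ ^+ _); congr (mpolyX _ _); apply: val_inj.
- by congr (_ ^+ _); congr (mpolyX _ _); apply: val_inj.
- have -> : Ordinal Hi = iz by apply: val_inj.
  by rewrite (hc m hm) !expr0.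
Qed.

Lemma in_Kx_C (k : K) : in_Kx (k%:MP : P).
Proof.
move=> m; rewrite msuppC; case: (k == 0) => //; rewrite inE => /eqP ->.
by rewrite !mnm0E.
Qed.

Lemma in_Kx_frac_C (k : K) : in_Kx_frac ((k%:MP : P)%:F).
Proof.
exists (k%:MP), 1; split; [exact: in_Kx_C | | exact: oner_neq0 | by rewrite tofrac1 divr1].
by rewrite -mpolyC1; exact: in_Kx_C.
Qed.

Lemma tele_gen (b q : P) (M : nat) (A B : int) : q != 0 -> (0 < M)%N ->
  shift (Posz M) A B q = q -> has_telescoper (b%:F / q%:F).
Proof.
move=> hq hM hMq.
have hpow : forall j : nat, shift (Posz (j * M)) (A * Posz j) (B * Posz j) q = q.
  elim=> [|j IH]; first by rewrite mul0n !mulr0 shift0.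
  rewrite -[in RHS]hMq -[in RHS]IH shift_comp.
  have e2 : forall X : int, X * Posz j.+1 = X + X * Posz j.
    by move=> X; rewrite -addn1 PoszD mulrDr mulr1 addrC.
  by rewrite mulSn PoszD !e2.
pose g j := shift (Posz (j * M)) (A * Posz j) (B * Posz j) b.
have [N [kap [[j0 hj0 hk] hsum]]] := @lin_dep (msize b) g (fun j => msize_shift _ _ _ _).
pose c j : RF := ((kap j)%:MP)%:F.
pose f := b%:F / q%:F.
pose F j := c j * fshift (Posz (j * M)) 0 0 f.
exists (mkseq (fun i => if (M %| i)%N then c (i %/ M)%N else 0) (N*M).+1); split.
- move=> r /mapP [i _ ->]; case: ifP => _; first exact: in_Kx_frac_C.
  by rewrite -tofrac0 -(mpolyC0 _ K); exact: in_Kx_frac_C.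
- apply/hasP; exists (c j0).
    apply/mapP; exists (j0 * M)%N.
      by rewrite mem_iota add0n ltnS leq_mul2r hj0 orbT.
    by rewrite dvdn_mull ?dvdnn // mulnK.
  by rewrite /c tofrac_eq0 mpolyC_eq0.
rewrite size_mkseq.
have -> : \sum_(i < (N * M).+1)
    (mkseq (fun i => if (M %| i)%N then c (i %/ M)%N else 0) (N * M).+1)`_i *
     fshift (Posz i) 0 0 (b%:F / (q%:F)) =
    \sum_(0 <= i < (N * M).+1) (if (M %| i)%N then F (i %/ M)%N else 0).
  rewrite big_mkord; apply: eq_bigr => i _.
  rewrite nth_mkseq //; case: ifP => hd; last by rewrite mul0r.
  by rewrite /F divnK.
rewrite sum_reindex // big_mkord.
have -> : \sum_(j < N.+1) F j =
  \sum_(j < N.+1) c j * - (fshift 0 (A * Posz j) (B * Posz j) (fshift (Posz (j * M)) 0 0 f)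
                             - fshift (Posz (j * M)) 0 0 f)
  + \sum_(j < N.+1) c j * fshift (Posz (j * M)) (A * Posz j) (B * Posz j) f.
  rewrite -big_split /=; apply: eq_bigr => j _.
  by rewrite /F fshift_comp !addr0 add0r opprB -mulrDr subrK.
have -> : \sum_(j < N.+1) c j * fshift (Posz (j * M)) (A * Posz j) (B * Posz j) f = 0.
  rewrite /f (eq_bigr (fun j : 'I_N.+1 => (kap j *: g j)%:F / q%:F)); last first.
    move=> j _; rewrite fshift_frac // hpow /c mulrA -tofracM mul_mpolyC //.
  by rewrite -big_distrl /= -raddf_sum /= hsum tofrac0 mul0r.
rewrite addr0; apply: summable_sum => j.
apply: summableC; apply: summableN; exact: summable_yz_shift.
Qed.

Definition fixes (p : P) a b e := shift a b e p = p.

Lemma fixes_add p a b e a' b' e' : fixes p a b e -> fixes p a' b' e' ->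
  fixes p (a + a') (b + b') (e + e').
Proof. by rewrite /fixes -shift_comp => h h'; rewrite h' h. Qed.

Lemma fixes_opp p a b e : fixes p a b e -> fixes p (-a) (-b) (-e).
Proof.
rewrite /fixes => h; rewrite -{1}h shift_comp !addNr shift0 //.
Qed.

Lemma fixes_muln p a b e (j : nat) : fixes p a b e ->
  fixes p (a * Posz j) (b * Posz j) (e * Posz j).
Proof.
move=> h; elim: j => [|j IH]; first by rewrite !mulr0 /fixes shift0.
have := fixes_add h IH.
by rewrite (_ : Posz j.+1 = 1 + Posz j) ?mulrDr ?mulr1 //; lia.
Qed.

Lemma fixes_mulz p a b e (z : int) : fixes p a b e ->
  fixes p (a * z) (b * z) (e * z).
Proof.
move=> h; case: z => j; first exact: fixes_muln.
have := fixes_opp (fixes_muln j.+1 h).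
by rewrite NegzE !mulrN.
Qed.

Lemma fixes_congr p a b e a' b' e' : a = a' -> b = b' -> e = e' ->
  fixes p a b e -> fixes p a' b' e'.
Proof. by move=> -> -> ->. Qed.

Lemma fixes_of_eq p a b e a' b' e' : shift a b e p = shift a' b' e' p ->
  fixes p (a - a') (b - b') (e - e').
Proof.
move/(congr1 (shift (-a') (-b') (-e'))); rewrite !shift_comp !addNr shift0 /fixes.
by rewrite ![_ + (- _)]addrC.
Qed.
End S.


Unset Implicit Arguments.
Set Strict Implicit.
Theorem lemma6p2 (K : fieldType) (hchar : [pchar K] =i pred0)
  (lam : nat) (b c d : {mpoly K[3]})
  (hlam : (0 < lam)%N)
  (hc : in_Kxy c)
  (hd : mirreducible d)
  (hb_prim : primitive_yz b) (hc_prim : primitive_yz c) (hd_prim : primitive_yz d)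
  (hdeg : (degz b < degz d)%N)
  (m : nat) (n k : int)
  (hm : (0 < m)%N)
  (hmd : shift (Posz m) 0 0 d = shift 0 n k d)
  (hmin : forall (m' : nat) (n' k' : int), (0 < m' < m)%N ->
            shift (Posz m') 0 0 d <> shift 0 n' k' d)
  (hcase :
     (exists (n1 n2 : nat) (k1 k2 : int), [/\ (0 < n1)%N, (0 < n2)%N,
          shift 0 (Posz n1) 0 d = shift 0 0 k1 d &
          shift (Posz n2) 0 0 c = shift 0 k2 0 c])
     \/
     (exists t : nat, (0 < t)%N /\
          shift (Posz (t * m)) 0 0 c = shift 0 ((Posz t) * n) 0 c)) :
  has_telescoper (b%:F / (c%:F * d%:F ^+ lam)).
Proof.
have cnz : c != 0.
  apply/eqP => c0.
  have h : (msize ('X_ix : {mpoly K[3]}) <= 1)%N.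
    apply: hc_prim; last by exists 0; rewrite c0 mulr0.
    by move=> mm; rewrite msuppX inE => /eqP ->; rewrite !mnm1E.
  by move: h; rewrite msizeX mdeg1.
have dnz : d != 0.
  by apply/eqP => d0; move: hd.1; rewrite d0 msize0.
rewrite -tofracXn -tofracM.
suff [M [A [B [hM hcf hdf]]]] : exists (M : nat) (A B : int),
    [/\ (0 < M)%N, fixes c (Posz M) A B & fixes d (Posz M) A B].
  apply: (@tele_gen _ _ _ M A B) => //; first by rewrite mulf_neq0 ?expf_neq0.
  by rewrite shiftM shiftXn hcf hdf.
have hd1 : fixes d (Posz m) (-n) (-k).
  by have := fixes_of_eq hmd; rewrite !subr0 !sub0r.
have hcz : forall e, fixes c 0 0 e by move=> e; apply: shift_Kxy.
case: hcase => [[n1 [n2 [k1 [k2 [hn1 hn2 h1 h2]]]]] | [t [ht h]]].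
- have hd2 : fixes d 0 (Posz n1) (- k1).
    by have := fixes_of_eq h1; rewrite !subr0 !sub0r.
  have hc2 : fixes c (Posz n2) (- k2) 0.
    by have := fixes_of_eq h2; rewrite !subr0 !sub0r.
  set B := - (k * Posz n1 * Posz n2) - k1 * (n * Posz n2 - Posz m * k2).
  exists (m * n1 * n2)%N, (- (Posz m * Posz n1 * k2)), B; split.
  + by rewrite !muln_gt0 hm hn1 hn2.
  + apply: (fixes_congr _ _ _ (fixes_add (fixes_mulz (Posz m * Posz n1) hc2) (hcz B)));
      rewrite ?PoszM /B; ring.
  + apply: (fixes_congr _ _ _ (fixes_add (fixes_mulz (Posz n1 * Posz n2) hd1)
                                         (fixes_mulz (n * Posz n2 - Posz m * k2) hd2)));
      rewrite ?PoszM /B; ring.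
- have hc2 : fixes c (Posz (t * m)) (- (Posz t * n)) 0.
    by have := fixes_of_eq h; rewrite !subr0 !sub0r.
  exists (t * m)%N, (- (Posz t * n)), (- (Posz t * k)); split.
  + by rewrite muln_gt0 ht hm.
  + apply: (fixes_congr _ _ _ (fixes_add hc2 (hcz (- (Posz t * k))))); by rewrite ?addr0 ?add0r.
  + apply: (fixes_congr _ _ _ (fixes_mulz (Posz t) hd1)); rewrite ?PoszM; ring.
Qed.
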